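(* Let $n\ge 3$ be an odd integer, $(\mathcal{C},\Sigma)$ an $n$-angulated category and $(\mathcal{A},\Sigma)$ a complete and dense $n$-angulated subcategory. Then for every object $C$ of $\mathcal{C}$: $C$ lies in $\mathcal{A}$ if and only if $[C]=0$ in $K_0(\mathcal{C})/\operatorname{Im}K_0(\mathcal{A})$.
   Context: All categories are small. Fix an integer $n\ge 3$. Let $\mathcal{C}$ be an additive category with an automorphism $\Sigma$. An $n$-$\Sigma$-sequence in $\mathcal{C}$ is a diagram $A_1\xrightarrow{\alpha_1}A_2\xrightarrow{\alpha_2}\cdots\xrightarrow{\alpha_{n-1}}A_n\xrightarrow{\alpha_n}\Sigma A_1$. Its left rotation is $A_2\xrightarrow{\alpha_2}\cdots\xrightarrow{\alpha_n}\Sigma A_1\xrightarrow{(-1)^n\Sigma\alpha_1}\Sigma A_2$. A morphism from $(A_\bullet,\alpha)$ to $(B_\bullet,\beta)$ is a tuple $(\varphi_1,\dots,\varphi_n)$, $\varphi_i:A_i\to B_i$, with $\beta_i\varphi_i=\varphi_{i+1}\alpha_i$ for $1\le i\le n-1$ and $\beta_n\varphi_n=(\Sigma\varphi_1)\alpha_n$; it is an isomorphism if all $\varphi_i$ are isomorphisms. Direct sums of sequences are taken termwise. $(\mathcal{C},\Sigma)$ is $n$-angulated if it is equipped with a collection $\mathscr N$ of $n$-$\Sigma$-sequences, called $n$-angles, such that: (N1)(a) $\mathscr N$ is closed under direct sums, direct summands and isomorphisms of $n$-$\Sigma$-sequences; (b) for every object $A$, the trivial sequence $A\xrightarrow{1}A\to0\to\cdots\to0\to\Sigma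 A$ is in $\mathscr N$; (c) every morphism $A_1\to A_2$ is the first morphism of some $n$-angle; (N2) an $n$-$\Sigma$-sequence is in $\mathscr N$ iff its left rotation is; (N3) given $n$-angles $(A_\bullet,\alpha),(B_\bullet,\beta)$ and $\varphi_1:A_1\to B_1$, $\varphi_2:A_2\to B_2$ with $\beta_1\varphi_1=\varphi_2\alpha_1$, there exist $\varphi_3,\dots,\varphi_n$ making $(\varphi_1,\dots,\varphi_n)$ a morphism; (N4) in (N3) the $\varphi_i$ can be chosen so that the mapping cone $A_2\oplus B_1\to A_3\oplus B_2\to\cdots\to\Sigma A_1\oplus B_n\to\Sigma A_2\oplus\Sigma B_1$, with maps $\left[\begin{smallmatrix}-\alpha_{i+1}&0\\ \varphi_{i+1}&\beta_i\end{smallmatrix}\right]$ ($1\le i\le n-1$) and last map $\left[\begin{smallmatrix}-\Sigma\alpha_1&0\\ \Sigma\varphi_1&\beta_n\end{smallmatrix}\right]$, is an $n$-angle. Grothendieck group: $F(\mathcal{C})$ is the free abelian group on isomorphism classes $\langle A\rangle$ of objects; for an $n$-angle $A_\bullet$, $\chi(A_\bullet)=\sum_{i=1}^n(-1)^{i+1}\langle A_i\rangle$; $R(\mathcal{C})$ is generated by all $\chi(A_\bullet)$, together with $\langle 0\rangle$ when $n$ is even; $K_0(\mathcal{C})=F(\mathcal{C})/R(\mathcal{C})$, $[A]$ the class of $\langle A\rangle$. An additive functor $L:\mathcal{C}\to\mathcal{C}'$ between $n$-angulated categories is $n$-angulated if there is a natural isomorphism $\eta:L\circ\Sigma\to\Sigma'\circ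 L$ such that $L$ sends each $n$-angle $(A_\bullet,\alpha)$ to the $n$-angle $L A_1\xrightarrow{L\alpha_1}\cdots\xrightarrow{L\alpha_{n-1}}LA_n\xrightarrow{\eta\circ L\alpha_n}\Sigma'LA_1$. An $n$-angulated subcategory of $(\mathcal{C},\Sigma)$ is a full subcategory $\mathcal{A}$, closed under isomorphisms, on which $\Sigma$ restricts to an automorphism, equipped with $n$-angles making $(\mathcal{A},\Sigma)$ $n$-angulated, such that the inclusion $\mathcal{A}\to\mathcal{C}$ is $n$-angulated. $\mathcal{A}$ is dense if every object of $\mathcal{C}$ is a direct summand of an object of $\mathcal{A}$; complete if whenever an $n$-angle $A_1\to\cdots\to A_n\to\Sigma A_1$ in $\mathcal{C}$ has $n-1$ of $A_1,\dots,A_n$ in $\mathcal{A}$, the remaining one is in $\mathcal{A}$. $\operatorname{Im}K_0(\mathcal{A})$ is the image of the homomorphism $K_0(\mathcal{A})\to K_0(\mathcal{C})$, $[A]\mapsto[A]$, induced by the inclusion. *)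

(* Defs.v *)
From mathcomp Require Import all_boot all_algebra.
From mathcomp Require Import boolp.
From Stdlib Require Lists.List.
Set Implicit Arguments. Unset Strict Implicit. Unset Printing Implicit Defensive.
Import GRing.Theory.
Local Open Scope ring_scope.

(* A small category, presented in the two-sorted way (a type of objects, a
   type of morphisms with domain and codomain maps), equipped with the data of
   an additive structure on hom-sets and an endofunctor Sigma.
   [comp g f] is the composite  g o f  (defined when cod f = dom g). *)
Record ncat := NCat {
  Ob : Type; Mor : Type;
  dom : Mor -> Ob; cod : Mor -> Ob;
  idm : Ob -> Mor;
  comp : Mor -> Mor -> Mor;
  zerom : Ob -> Ob -> Mor;
  addm : Mor -> Mor -> Mor;
  oppm : Mor -> Mor;
  SigO : Ob -> Ob;
  SigM : Mor -> Mor }.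

Arguments dom {_}. Arguments cod {_}. Arguments idm {_}. Arguments comp {_}.
Arguments zerom {_}. Arguments addm {_}. Arguments oppm {_}.
Arguments SigO {_}. Arguments SigM {_}.

Section NAngulated.
Variable C : ncat.

Definition hom (f : Mor C) (A B : Ob C) : Prop := dom f = A /\ cod f = B.

Record preadditive : Prop := {
  pa_id : forall A, hom (idm A) A A;
  pa_comp : forall f g A B D, hom f A B -> hom g B D -> hom (comp g f) A D;
  pa_idl : forall f A B, hom f A B -> comp (idm B) f = f;
  pa_idr : forall f A B, hom f A B -> comp f (idm A) = f;
  pa_assoc : forall f g h A B D E, hom f A B -> hom g B D -> hom h D E ->
     comp h (comp g f) = comp (comp h g) f;
  pa_zero : forall A B, hom (zerom A B) A B;
  pa_add : forall f g A B, hom f A B -> hom g A B -> hom (addm f g) A B;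
  pa_opp : forall f A B, hom f A B -> hom (oppm f) A B;
  pa_addA : forall f g h A B, hom f A B -> hom g A B -> hom h A B ->
     addm f (addm g h) = addm (addm f g) h;
  pa_addC : forall f g A B, hom f A B -> hom g A B -> addm f g = addm g f;
  pa_add0 : forall f A B, hom f A B -> addm f (zerom A B) = f;
  pa_addN : forall f A B, hom f A B -> addm f (oppm f) = zerom A B;
  pa_compDl : forall f g h A B D, hom f A B -> hom g A B -> hom h B D ->
     comp h (addm f g) = addm (comp h f) (comp h g);
  pa_compDr : forall f g h A B D, hom f B D -> hom g B D -> hom h A B ->
     comp (addm f g) h = addm (comp f h) (comp g h) }.

Definition iso (f : Mor C) : Prop :=
  exists g, hom g (cod f) (dom f) /\ comp g f = idm (dom f) /\ comp f g = idm (cod f).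

Definition isoob (X Y : Ob C) : Prop := exists f, hom f X Y /\ iso f.

Definition is_zero (Z : Ob C) : Prop := idm Z = zerom Z Z.

Record bip := Bip { bo : Ob C; bi1 : Mor C; bi2 : Mor C; bp1 : Mor C; bp2 : Mor C }.

Definition is_biprod (X Y : Ob C) (d : bip) : Prop :=
  [/\ hom (bi1 d) X (bo d), hom (bi2 d) Y (bo d), hom (bp1 d) (bo d) X,
      hom (bp2 d) (bo d) Y &
  [/\ comp (bp1 d) (bi1 d) = idm X, comp (bp2 d) (bi2 d) = idm Y,
      comp (bp1 d) (bi2 d) = zerom Y X, comp (bp2 d) (bi1 d) = zerom X Y &
      addm (comp (bi1 d) (bp1 d)) (comp (bi2 d) (bp2 d)) = idm (bo d)]].

Definition additive_on (P : Ob C -> Prop) : Prop :=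
  [/\ preadditive,
      exists Z, P Z /\ is_zero Z &
      forall X Y, P X -> P Y -> exists d, P (bo d) /\ is_biprod X Y d].

Definition sig_auto (P : Ob C -> Prop) : Prop :=
  [/\ (forall f A B, hom f A B -> hom (SigM f) (SigO A) (SigO B)),
      (forall A : Ob C, SigM (idm A) = idm (SigO A)),
      (forall f g A B D, hom f A B -> hom g B D ->
          SigM (comp g f) = comp (SigM g) (SigM f)),
      (forall f g A B, hom f A B -> hom g A B ->
          SigM (addm f g) = addm (SigM f) (SigM g)) &
   [/\ (forall X, P X -> P (SigO X)),
       (forall X Y, P X -> P Y -> SigO X = SigO Y -> X = Y),
       (forall Y, P Y -> exists X, P X /\ SigO X = Y),
       (forall A B f g, P A -> P B -> hom f A B -> hom g A B -> SigM f = SigM g -> f = g) &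
       (forall A B g, P A -> P B -> hom g (SigO A) (SigO B) ->
          exists f, hom f A B /\ SigM f = g)]].

(* n-Sigma-sequences, indexed from 0: objects so 0 .. so (n-1) (= A_1 .. A_n),
   morphisms sm i : so i -> so (i+1) for i < n-1 (= alpha_(i+1)) and
   sm (n-1) : so (n-1) -> Sigma (so 0) (= alpha_n).  Values at other indices
   are irrelevant. *)
Record nsigseq := NSeq { so : nat -> Ob C; sm : nat -> Mor C }.

Variable n : nat.

Definition is_nseq (P : Ob C -> Prop) (s : nsigseq) : Prop :=
  [/\ forall i, (i < n)%N -> P (so s i),
      forall i, (i.+1 < n)%N -> hom (sm s i) (so s i) (so s i.+1) &
      hom (sm s n.-1) (so s n.-1) (SigO (so s 0))].

Definition sgn (f : Mor C) : Mor C := if odd n then oppm f else f.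

Definition lrot (s : nsigseq) : nsigseq :=
  NSeq (fun i => if (i.+1 < n)%N then so s i.+1 else SigO (so s 0))
       (fun i => if (i.+1 < n)%N then sm s i.+1 else sgn (SigM (sm s 0))).

Definition seqmor (s t : nsigseq) (phi : nat -> Mor C) : Prop :=
  [/\ forall i, (i < n)%N -> hom (phi i) (so s i) (so t i),
      forall i, (i.+1 < n)%N -> comp (sm t i) (phi i) = comp (phi i.+1) (sm s i) &
      comp (sm t n.-1) (phi n.-1) = comp (SigM (phi 0%N)) (sm s n.-1)].

Definition seqiso (s t : nsigseq) : Prop :=
  exists phi, seqmor s t phi /\ forall i, (i < n)%N -> iso (phi i).

Definition seqsum (s t u : nsigseq) : Prop :=
  exists e1 e2 q1 q2, [/\ seqmor s u e1, seqmor t u e2, seqmor u s q1, seqmor u t q2 &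
    forall i, (i < n)%N ->
      is_biprod (so s i) (so t i) (Bip (so u i) (e1 i) (e2 i) (q1 i) (q2 i))].

(* trivial sequence  A -1-> A -> Z -> ... -> Z -> Sigma A, Z a zero object *)
Definition triv (A Z : Ob C) : nsigseq :=
  let o := fun i => if (i < 2)%N then A else Z in
  NSeq o (fun i => if i == 0%N then idm A
                   else if (i.+1 < n)%N then zerom (o i) (o i.+1)
                   else zerom (o i) (SigO A)).

(* mapping cone, built from chosen biproducts D j of (lrot s)_j and t_j *)
Definition cone (s t : nsigseq) (phi : nat -> Mor C) (D : nat -> bip) : nsigseq :=
  NSeq (fun j => bo (D j))
   (fun j => if (j.+1 < n)%N then
       addm (addm (comp (bi1 (D j.+1)) (comp (oppm (sm s j.+1)) (bp1 (D j))))
                  (comp (bi2 (D j.+1)) (comp (phi j.+1) (bp1 (D j)))))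
            (comp (bi2 (D j.+1)) (comp (sm t j) (bp2 (D j))))
     else
       addm (addm (comp (SigM (bi1 (D 0%N))) (comp (oppm (SigM (sm s 0%N))) (bp1 (D j))))
                  (comp (SigM (bi2 (D 0%N))) (comp (SigM (phi 0%N)) (bp1 (D j)))))
            (comp (SigM (bi2 (D 0%N))) (comp (sm t j) (bp2 (D j))))).

Record nangulated (P : Ob C -> Prop) (N : nsigseq -> Prop) : Prop := {
  na_add : additive_on P;
  na_sig : sig_auto P;
  na_wf : forall s, N s -> is_nseq P s;
  na_iso : forall s t, N s -> is_nseq P t -> seqiso s t -> N t;
  na_sum : forall s t u, is_nseq P s -> is_nseq P t -> is_nseq P u ->
     seqsum s t u -> (N u <-> N s /\ N t);
  na_triv : forall A Z, P A -> P Z -> is_zero Z -> N (triv A Z);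
  na_ext : forall f, P (dom f) -> P (cod f) -> exists s, N s /\ sm s 0%N = f;
  na_rot : forall s, is_nseq P s -> (N s <-> N (lrot s));
  na_mor : forall s t f1 f2, N s -> N t ->
     hom f1 (so s 0%N) (so t 0%N) -> hom f2 (so s 1%N) (so t 1%N) ->
     comp (sm t 0%N) f1 = comp f2 (sm s 0%N) ->
     exists phi, [/\ seqmor s t phi, phi 0%N = f1 & phi 1%N = f2];
  na_cone : forall s t f1 f2, N s -> N t ->
     hom f1 (so s 0%N) (so t 0%N) -> hom f2 (so s 1%N) (so t 1%N) ->
     comp (sm t 0%N) f1 = comp f2 (sm s 0%N) ->
     exists phi, [/\ seqmor s t phi, phi 0%N = f1, phi 1%N = f2 &
       forall D : nat -> bip,
         (forall j, (j < n)%N -> P (bo (D j)) /\ is_biprod (so (lrot s) j) (so t j) (D j)) ->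
         N (cone s t phi D)] }.

Definition incl_nangulated (N : nsigseq -> Prop) (P : Ob C -> Prop) (NP : nsigseq -> Prop) : Prop :=
  exists eta : Ob C -> Mor C,
    [/\ forall X, P X -> hom (eta X) (SigO X) (SigO X) /\ iso (eta X),
        forall f, P (dom f) -> P (cod f) ->
          comp (eta (cod f)) (SigM f) = comp (SigM f) (eta (dom f)) &
        forall s, NP s ->
          N (NSeq (so s) (fun i => if i == n.-1 then comp (eta (so s 0%N)) (sm s n.-1)
                                   else sm s i))].

(* n-angulated subcategory of (C, Sigma, N): full, closed under isomorphisms,
   Sigma restricts to an automorphism (contained in [nangulated]), with its own
   n-angles NP, and the inclusion is n-angulated. *)
Definition nang_subcat (N : nsigseq -> Prop) (P : Ob C -> Prop) (NP : nsigseq -> Prop) : Prop :=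
  [/\ forall X Y, P X -> isoob X Y -> P Y,
      nangulated P NP &
      incl_nangulated N P NP].

Definition dense (P : Ob C -> Prop) : Prop :=
  forall X, exists Z d, is_biprod X Z d /\ P (bo d).

Definition complete (N : nsigseq -> Prop) (P : Ob C -> Prop) : Prop :=
  forall s, N s -> forall k, (k < n)%N ->
    (forall i, (i < n)%N -> i != k -> P (so s i)) -> P (so s k).

(* ---- Grothendieck group ----
   An element of F(C) (free abelian group on isomorphism classes) is
   represented by a finite formal combination  sum c_k <X_k>; two combinations
   are equal in F(C) iff every isomorphism class gets the same coefficient. *)
Definition fsum := seq (int * Ob C).

Definition coef (L : fsum) (Y : Ob C) : int :=
  \sum_(p <- L) (if `[< isoob p.2 Y >] then p.1 else 0).

Definition Feq (L L' : fsum) : Prop := forall Y, coef L Y = coef L' Y.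

Definition fscale (k : int) (L : fsum) : fsum := [seq (k * p.1, p.2) | p <- L].

Definition in_span (G : fsum -> Prop) (L : fsum) : Prop :=
  exists gs : seq (int * fsum),
    Stdlib.Lists.List.Forall (fun g => G g.2) gs /\
    Feq L (flatten [seq fscale g.1 g.2 | g <- gs]).

Definition chi (s : nsigseq) : fsum := [seq ((-1) ^+ i, so s i) | i <- iota 0 n].

Definition Rgen (N : nsigseq -> Prop) (L : fsum) : Prop :=
  (exists s, N s /\ L = chi s) \/
  (~~ odd n /\ exists Z, is_zero Z /\ L = [:: (1, Z)]).

Definition ImGen (P : Ob C -> Prop) (L : fsum) : Prop :=
  exists A, P A /\ L = [:: (1, A)].

(* [X] = 0 in K0(C) / Im K0(A), i.e. <X> in R(C) + Im(F(A) -> F(C)) *)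
Definition class_zero_mod_image (N : nsigseq -> Prop) (P : Ob C -> Prop) (X : Ob C) : Prop :=
  exists L1 L2, [/\ in_span (Rgen N) L1, in_span (ImGen P) L2 &
                    Feq [:: (1, X)] (L1 ++ L2)].

End NAngulated.

(* Main.v *)
Require Import Defs.
From HB Require Import structures.
From mathcomp Require Import all_boot all_algebra.
From mathcomp Require Import boolp.
From mathcomp Require Import zify.
Require Import Defs.
Set Implicit Arguments. Unset Strict Implicit. Unset Printing Implicit Defensive.
Import GRing.Theory.
Local Open Scope ring_scope.

Section Typed.
Variable C : ncat.
Hypothesis HP : preadditive C.

Definition H (A B : Ob C) := {f : Mor C | hom f A B}.
HB.instance Definition _ A B := gen_eqMixin (H A B).
HB.instance Definition _ A B := gen_choiceMixin (H A B).

Lemma Hext A B (f g : H A B) : sval f = sval g -> f = g.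
Proof. case: f g => [f pf] [g pg] /= E; subst; congr exist; apply: Prop_irrelevance. Qed.

Definition tc A B D (g : H B D) (f : H A B) : H A D :=
  exist _ (comp (sval g) (sval f)) (pa_comp HP (svalP f) (svalP g)).
Definition ti A : H A A := exist _ (idm A) (pa_id HP A).
Definition tz A B : H A B := exist _ (zerom A B) (pa_zero HP A B).
Definition ta A B (f g : H A B) : H A B := exist _ (addm (sval f) (sval g)) (pa_add HP (svalP f) (svalP g)).
Definition tn A B (f : H A B) : H A B := exist _ (oppm (sval f)) (pa_opp HP (svalP f)).

Lemma taA A B : associative (@ta A B).
Proof. by move=> f g h; apply: Hext; rewrite /= (pa_addA HP (svalP f) (svalP g) (svalP h)). Qed.
Lemma taC A B : commutative (@ta A B).
Proof. by move=> f g; apply: Hext; rewrite /= (pa_addC HP (svalP f) (svalP g)). Qed.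
Lemma ta0 A B : left_id (tz A B) (@ta A B).
Proof. by move=> f; rewrite taC; apply: Hext; rewrite /= (pa_add0 HP (svalP f)). Qed.
Lemma taN A B : left_inverse (tz A B) (@tn A B) (@ta A B).
Proof. by move=> f; rewrite taC; apply: Hext; rewrite /= (pa_addN HP (svalP f)). Qed.

HB.instance Definition _ A B := GRing.isZmodule.Build (H A B) (@taA A B) (@taC A B) (@ta0 A B) (@taN A B).

Lemma tzE A B : tz A B = 0. Proof. by []. Qed.

Local Notation "g ⊚ f" := (tc g f) (at level 40, left associativity).

Lemma tcA A B D E (f : H A B) (g : H B D) (h : H D E) : h ⊚ (g ⊚ f) = h ⊚ g ⊚ f.
Proof. by apply: Hext; rewrite /= (pa_assoc HP (svalP f) (svalP g) (svalP h)). Qed.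
Lemma tc1l A B (f : H A B) : ti B ⊚ f = f.
Proof. by apply: Hext; rewrite /= (pa_idl HP (svalP f)). Qed.
Lemma tc1r A B (f : H A B) : f ⊚ ti A = f.
Proof. by apply: Hext; rewrite /= (pa_idr HP (svalP f)). Qed.
Lemma tcDr A B D (f g : H A B) (h : H B D) : h ⊚ (f + g) = h ⊚ f + h ⊚ g.
Proof. by apply: Hext; rewrite /= (pa_compDl HP (svalP f) (svalP g) (svalP h)). Qed.
Lemma tcDl A B D (f g : H B D) (h : H A B) : (f + g) ⊚ h = f ⊚ h + g ⊚ h.
Proof. by apply: Hext; rewrite /= (pa_compDr HP (svalP f) (svalP g) (svalP h)). Qed.
Lemma tc0r A B D (h : H B D) : h ⊚ (0 : H A B) = 0.
Proof. have e : h ⊚ 0 + h ⊚ (0 : H A B) = h ⊚ 0 + 0 by rewrite -tcDr !addr0. exact: (addrI _ e). Qed.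
Lemma tc0l A B D (h : H A B) : (0 : H B D) ⊚ h = 0.
Proof. have e : 0 ⊚ h + (0 : H B D) ⊚ h = 0 ⊚ h + 0 by rewrite -tcDl !addr0. exact: (addrI _ e). Qed.
Lemma tcNr A B D (f : H A B) (h : H B D) : h ⊚ (- f) = - (h ⊚ f).
Proof. by apply/eqP; rewrite -subr_eq0 opprK -tcDr addNr tc0r. Qed.
Lemma tcNl A B D (f : H B D) (h : H A B) : (- f) ⊚ h = - (f ⊚ h).
Proof. by apply/eqP; rewrite -subr_eq0 opprK -tcDl addNr tc0l. Qed.

Definition tiso A B (f : H A B) := exists g : H B A, g ⊚ f = ti A /\ f ⊚ g = ti B.

Lemma isoobT (X Y : Ob C) : isoob X Y <-> exists f : H X Y, tiso f.
Proof.
split.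
  case=> f [hf [g [hg [e1 e2]]]].
  case: (hf) hg e1 e2 => -> -> hg e1 e2.
  exists (exist _ f hf), (exist _ g hg); split; exact: Hext.
case=> [[f hf] [[g hg] [e1 e2]]]; exists f; split => //.
have [df cf] := hf.
exists g; rewrite df cf; split => //; split; [move/(congr1 sval): e1|move/(congr1 sval): e2] => //.
Qed.

Lemma tiso_refl A : tiso (ti A).
Proof. by exists (ti A); rewrite tc1l. Qed.
Lemma tiso_comp A B D (f : H A B) (g : H B D) : tiso f -> tiso g -> tiso (g ⊚ f).
Proof.
case=> f' [f1 f2] [g' [g1 g2]]; exists (f' ⊚ g'); split.
  by rewrite !tcA -(tcA g g' f') g1 tc1r f1.
by rewrite !tcA -(tcA f' f g) f2 tc1r g2.
Qed.
Lemma tiso_inv A B (f : H A B) (g : H B A) : g ⊚ f = ti A -> f ⊚ g = ti B -> tiso g.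
Proof. by move=> e1 e2; exists f. Qed.

Lemma isoob_refl (X : Ob C) : isoob X X.
Proof. by apply/isoobT; exists (ti X); apply: tiso_refl. Qed.
Lemma isoob_sym (X Y : Ob C) : isoob X Y -> isoob Y X.
Proof. by move/isoobT=> [f [g [e1 e2]]]; apply/isoobT; exists g, f. Qed.
Lemma isoob_trans (X Y Z : Ob C) : isoob X Y -> isoob Y Z -> isoob X Z.
Proof.
move/isoobT=> [f hf] /isoobT [g hg]; apply/isoobT; exists (g ⊚ f); exact: tiso_comp.
Qed.

Definition tbip X Y O (i1 : H X O) (i2 : H Y O) (p1 : H O X) (p2 : H O Y) :=
  [/\ p1 ⊚ i1 = ti X, p2 ⊚ i2 = ti Y, p1 ⊚ i2 = 0, p2 ⊚ i1 = 0 & i1 ⊚ p1 + i2 ⊚ p2 = ti O].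

Lemma bipT (X Y : Ob C) d : is_biprod X Y d ->
  exists (i1 : H X (bo d)) (i2 : H Y (bo d)) (p1 : H (bo d) X) (p2 : H (bo d) Y),
   [/\ sval i1 = bi1 d, sval i2 = bi2 d, sval p1 = bp1 d, sval p2 = bp2 d & tbip i1 i2 p1 p2].
Proof.
case=> h1 h2 h3 h4 [e1 e2 e3 e4 e5].
exists (exist (fun f => hom f _ _) _ h1), (exist (fun f => hom f _ _) _ h2), (exist (fun f => hom f _ _) _ h3), (exist (fun f => hom f _ _) _ h4); split => //.
by split; apply: Hext.
Qed.

Lemma Tbip X Y O (i1 : H X O) (i2 : H Y O) (p1 : H O X) (p2 : H O Y) :
  tbip i1 i2 p1 p2 -> is_biprod X Y (Bip O (sval i1) (sval i2) (sval p1) (sval p2)).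
Proof.
case=> e1 e2 e3 e4 e5; split; [exact: (svalP i1)|exact: (svalP i2)|exact: (svalP p1)|exact: (svalP p2)|].
split; [move/(congr1 sval): e1|move/(congr1 sval): e2|move/(congr1 sval): e3
       |move/(congr1 sval): e4|move/(congr1 sval): e5] => //.
Qed.

Lemma cancI A B D (a : H A B) (b : H B A) (x : H A D) : b ⊚ a = ti A -> x ⊚ b ⊚ a = x.
Proof. by move=> e; rewrite -tcA e tc1r. Qed.
Lemma cancZ A B A' D (a : H A B) (b : H B A') (x : H A' D) : b ⊚ a = 0 -> x ⊚ b ⊚ a = 0.
Proof. by move=> e; rewrite -tcA e tc0r. Qed.

Ltac simp := rewrite ?tcDl ?tcDr ?tcNl ?tcNr ?tcA ?tc0l ?tc0r ?tc1l ?tc1r ?addr0 ?add0r.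
Ltac bs e := rewrite ?e ?(cancI _ e) ?(cancZ _ e).

Lemma tbip_iso X Y O O' (i1 : H X O) (i2 : H Y O) (p1 : H O X) (p2 : H O Y)
  (j1 : H X O') (j2 : H Y O') (q1 : H O' X) (q2 : H O' Y) :
  tbip i1 i2 p1 p2 -> tbip j1 j2 q1 q2 -> tiso (j1 ⊚ p1 + j2 ⊚ p2).
Proof.
case=> e1 e2 e3 e4 e5 [f1 f2 f3 f4 f5]; exists (i1 ⊚ q1 + i2 ⊚ q2); split.
  by simp; bs f1; bs f2; bs f3; bs f4; simp.
by simp; bs e1; bs e2; bs e3; bs e4; simp.
Qed.

Lemma tbip_sym X Y O (i1 : H X O) (i2 : H Y O) (p1 : H O X) (p2 : H O Y) :
  tbip i1 i2 p1 p2 -> tbip i2 i1 p2 p1.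
Proof. by case=> e1 e2 e3 e4 e5; split => //; rewrite addrC. Qed.

Lemma tbip_transl X X' Y O (i1 : H X O) (i2 : H Y O) (p1 : H O X) (p2 : H O Y)
  (a : H X X') (b : H X' X) : b ⊚ a = ti X -> a ⊚ b = ti X' ->
  tbip i1 i2 p1 p2 -> tbip (i1 ⊚ b) i2 (a ⊚ p1) p2.
Proof.
move=> ba ab [e1 e2 e3 e4 e5]; split; simp; bs e1; bs e2; bs e3; bs e4; simp => //.
by bs ba; simp.
Qed.

Lemma tbip_zero X Z : ti Z = 0 -> tbip (ti X) (0 : H Z X) (ti X) 0.
Proof. by move=> z; split; simp. Qed.

Lemma tbip_assoc X Y W S O E (i1 : H X S) (i2 : H Y S) p1 p2 (j1 : H S O) (j2 : H W O) q1 q2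
  (k1 : H Y E) (k2 : H W E) r1 r2 :
  tbip i1 i2 p1 p2 -> tbip j1 j2 q1 q2 -> tbip k1 k2 r1 r2 ->
  tbip (j1 ⊚ i1) (j1 ⊚ i2 ⊚ r1 + j2 ⊚ r2) (p1 ⊚ q1) (k1 ⊚ p2 ⊚ q1 + k2 ⊚ q2).
Proof.
case=> e1 e2 e3 e4 e5 [f1 f2 f3 f4 f5] [g1 g2 g3 g4 g5]; split.
- by simp; bs f1; bs e1; simp.
- by simp; bs f1; bs f2; bs f3; bs f4; bs e2; simp.
- by simp; bs f1; bs f3; bs e3; simp.
- by simp; bs f1; bs f4; bs e4; simp.
rewrite -f5 -[j1 in RHS]tc1r -e5; simp; bs g1; bs g2; bs g3; bs g4; simp.
by rewrite !addrA.
Qed.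

Lemma zeroT (Z : Ob C) : is_zero Z -> ti Z = 0.
Proof. by move=> z; apply: Hext. Qed.

Lemma tbip_isoob X Y O O' (i1 : H X O) (i2 : H Y O) (p1 : H O X) (p2 : H O Y)
  (j1 : H X O') (j2 : H Y O') (q1 : H O' X) (q2 : H O' Y) :
  tbip i1 i2 p1 p2 -> tbip j1 j2 q1 q2 -> isoob O O'.
Proof. by move=> a b; apply/isoobT; eexists; exact: tbip_iso a b. Qed.

Lemma biprod_uniq (X Y : Ob C) d d' : is_biprod X Y d -> is_biprod X Y d' -> isoob (bo d) (bo d').
Proof.
move=> /bipT [i1 [i2 [p1 [p2 [_ _ _ _ b]]]]] /bipT [j1 [j2 [q1 [q2 [_ _ _ _ b']]]]].
exact: tbip_isoob b b'.
Qed.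

Lemma biprod_isoL (X X' Y : Ob C) d d' : is_biprod X Y d -> isoob X X' -> is_biprod X' Y d' ->
  isoob (bo d) (bo d').
Proof.
move=> /bipT [i1 [i2 [p1 [p2 [_ _ _ _ b]]]]] /isoobT [a [a' [e1 e2]]]
  /bipT [j1 [j2 [q1 [q2 [_ _ _ _ b']]]]].
exact: tbip_isoob (tbip_transl e1 e2 b) b'.
Qed.

Lemma biprod_comm (X Y : Ob C) d d' : is_biprod X Y d -> is_biprod Y X d' -> isoob (bo d) (bo d').
Proof.
move=> /bipT [i1 [i2 [p1 [p2 [_ _ _ _ b]]]]] /bipT [j1 [j2 [q1 [q2 [_ _ _ _ b']]]]].
exact: tbip_isoob (tbip_sym b) b'.
Qed.

Lemma biprod_isoR (X Y Y' : Ob C) d d' : is_biprod X Y d -> isoob Y Y' -> is_biprod X Y' d' ->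
  isoob (bo d) (bo d').
Proof.
move=> /bipT [i1 [i2 [p1 [p2 [_ _ _ _ b]]]]] /isoobT [a [a' [e1 e2]]]
  /bipT [j1 [j2 [q1 [q2 [_ _ _ _ b']]]]].
exact: tbip_isoob (tbip_sym (tbip_transl e1 e2 (tbip_sym b))) b'.
Qed.

Lemma biprod_zero (X Z : Ob C) d : is_zero Z -> is_biprod X Z d -> isoob (bo d) X.
Proof.
move=> /zeroT z /bipT [i1 [i2 [p1 [p2 [_ _ _ _ b]]]]].
exact: tbip_isoob b (tbip_zero X z).
Qed.

Lemma biprod_assoc (X Y W : Ob C) dS dO dE dO' :
  is_biprod X Y dS -> is_biprod (bo dS) W dO -> is_biprod Y W dE -> is_biprod X (bo dE) dO' ->
  isoob (bo dO) (bo dO').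
Proof.
move=> /bipT [i1 [i2 [p1 [p2 [_ _ _ _ b1]]]]] /bipT [j1 [j2 [q1 [q2 [_ _ _ _ b2]]]]].
move=> /bipT [k1 [k2 [r1 [r2 [_ _ _ _ b3]]]]] /bipT [l1 [l2 [s1 [s2 [_ _ _ _ b4]]]]].
exact: tbip_isoob (tbip_assoc b1 b2 b3) b4.
Qed.

Lemma zero_iso (Z Z' : Ob C) : is_zero Z -> is_zero Z' -> isoob Z Z'.
Proof.
move=> /zeroT z /zeroT z'; apply/isoobT; exists 0; exists 0; by rewrite !tc0l z z'.
Qed.

Lemma square S1 S2 O T1 T2 O' (i1 : H S1 O) (i2 : H S2 O) p1 p2 (j1 : H T1 O') (j2 : H T2 O') q1 q2
  (a : H S1 T1) (b : H S2 T2) :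
  tbip i1 i2 p1 p2 -> tbip j1 j2 q1 q2 ->
  [/\ (j1⊚a⊚p1 + j2⊚b⊚p2) ⊚ i1 = j1 ⊚ a, (j1⊚a⊚p1 + j2⊚b⊚p2) ⊚ i2 = j2 ⊚ b,
      q1 ⊚ (j1⊚a⊚p1 + j2⊚b⊚p2) = a ⊚ p1 & q2 ⊚ (j1⊚a⊚p1 + j2⊚b⊚p2) = b ⊚ p2].
Proof.
case=> e1 e2 e3 e4 e5 [f1 f2 f3 f4 f5]; split; simp; bs e1; bs e2; bs e3; bs e4;
  bs f1; bs f2; bs f3; bs f4; by simp.
Qed.

Hypothesis HS : sig_auto (fun _ : Ob C => True).

Lemma sH f (A B : Ob C) : hom f A B -> hom (SigM f) (SigO A) (SigO B).
Proof. by case: HS => h _ _ _ _; apply: h. Qed.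

Definition ts A B (f : H A B) : H (SigO A) (SigO B) := exist _ (SigM (sval f)) (sH (svalP f)).

Lemma tsC A B D (f : H A B) (g : H B D) : ts (g ⊚ f) = ts g ⊚ ts f.
Proof. by apply: Hext; case: HS => _ _ h _ _; rewrite /= (h _ _ _ _ _ (svalP f) (svalP g)). Qed.
Lemma ts1 A : ts (ti A) = ti (SigO A).
Proof. by apply: Hext; case: HS => _ h _ _ _; rewrite /= h. Qed.
Lemma tsD A B (f g : H A B) : ts (f + g) = ts f + ts g.
Proof. by apply: Hext; case: HS => _ _ _ h _; rewrite /= (h _ _ _ _ (svalP f) (svalP g)). Qed.
Lemma ts0 A B : ts (0 : H A B) = 0.
Proof. have e : ts (0 : H A B) + ts 0 = ts 0 + 0 by rewrite -tsD !addr0. exact: (addrI _ e). Qed.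

Lemma tbip_ts X Y O (i1 : H X O) (i2 : H Y O) p1 p2 :
  tbip i1 i2 p1 p2 -> tbip (ts i1) (ts i2) (ts p1) (ts p2).
Proof. by case=> e1 e2 e3 e4 e5; split; rewrite -?tsC -?tsD ?e1 ?e2 ?e3 ?e4 ?e5 ?ts1 ?ts0. Qed.

Lemma zero_sig (Z : Ob C) : is_zero Z -> is_zero (SigO Z).
Proof. move=> /zeroT z; rewrite /is_zero; have := congr1 sval (ts1 Z); rewrite z ts0 /= => <- //. Qed.

Variable n : nat.

Definition sumseq (s t : nsigseq C) (D : nat -> bip C) : nsigseq C :=
  NSeq (fun i => bo (D i))
   (fun i => if (i.+1 < n)%N then
       addm (comp (comp (bi1 (D i.+1)) (sm s i)) (bp1 (D i)))
            (comp (comp (bi2 (D i.+1)) (sm t i)) (bp2 (D i)))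
     else
       addm (comp (comp (SigM (bi1 (D 0%N))) (sm s i)) (bp1 (D i)))
            (comp (comp (SigM (bi2 (D 0%N))) (sm t i)) (bp2 (D i)))).

Lemma bipE (d : bip C) : d = Bip (bo d) (bi1 d) (bi2 d) (bp1 d) (bp2 d).
Proof. by case: d. Qed.

Lemma nseq_sum (s t : nsigseq C) (D : nat -> bip C) : (0 < n)%N ->
  is_nseq n (fun _ => True) s -> is_nseq n (fun _ => True) t ->
  (forall i, (i < n)%N -> is_biprod (so s i) (so t i) (D i)) ->
  is_nseq n (fun _ => True) (sumseq s t D) /\ seqsum n s t (sumseq s t D).
Proof.
move=> n0 [_ hs hsl] [_ ht htl] hD.
have step : forall i, (i.+1 < n)%N ->
  [/\ hom (sm (sumseq s t D) i) (bo (D i)) (bo (D i.+1)),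
      comp (sm (sumseq s t D) i) (bi1 (D i)) = comp (bi1 (D i.+1)) (sm s i),
      comp (sm (sumseq s t D) i) (bi2 (D i)) = comp (bi2 (D i.+1)) (sm t i),
      comp (sm s i) (bp1 (D i)) = comp (bp1 (D i.+1)) (sm (sumseq s t D) i) &
      comp (sm t i) (bp2 (D i)) = comp (bp2 (D i.+1)) (sm (sumseq s t D) i)].
  move=> i ni; rewrite /= ni.
  have [I1 [I2 [P1 [P2 [E1 E2 E3 E4 b1]]]]] := bipT (hD i (ltnW ni)).
  have [J1 [J2 [Q1 [Q2 [F1 F2 F3 F4 b2]]]]] := bipT (hD i.+1 ni).
  have [G1 G2 G3 G4] := square (exist (fun f => hom f _ _) _ (hs i ni))
                               (exist (fun f => hom f _ _) _ (ht i ni)) b1 b2.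
  rewrite -E1 -E2 -E3 -E4 -F1 -F2 -F3 -F4; split.
  - exact: (svalP (J1 ⊚ exist (fun f => hom f _ _) _ (hs i ni) ⊚ P1 +
                   J2 ⊚ exist (fun f => hom f _ _) _ (ht i ni) ⊚ P2)).
  - exact: (congr1 sval G1).
  - exact: (congr1 sval G2).
  - exact: (esym (congr1 sval G3)).
  - exact: (esym (congr1 sval G4)).
have nl : ~~ (n.-1.+1 < n)%N by rewrite prednK // ltnn.
have last :
  [/\ hom (sm (sumseq s t D) n.-1) (bo (D n.-1)) (SigO (bo (D 0%N))),
      comp (sm (sumseq s t D) n.-1) (bi1 (D n.-1)) = comp (SigM (bi1 (D 0%N))) (sm s n.-1),
      comp (sm (sumseq s t D) n.-1) (bi2 (D n.-1)) = comp (SigM (bi2 (D 0%N))) (sm t n.-1),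
      comp (sm s n.-1) (bp1 (D n.-1)) = comp (SigM (bp1 (D 0%N))) (sm (sumseq s t D) n.-1) &
      comp (sm t n.-1) (bp2 (D n.-1)) = comp (SigM (bp2 (D 0%N))) (sm (sumseq s t D) n.-1)].
  rewrite /= (negbTE nl).
  have [I1 [I2 [P1 [P2 [E1 E2 E3 E4 b1]]]]] := bipT (hD n.-1 (ltac:(by rewrite ltn_predL))).
  have [J1 [J2 [Q1 [Q2 [F1 F2 F3 F4 b2]]]]] := bipT (hD 0%N n0).
  have [G1 G2 G3 G4] := square (exist (fun f => hom f _ _) _ hsl)
                               (exist (fun f => hom f _ _) _ htl) b1 (tbip_ts b2).
  rewrite -E1 -E2 -E3 -E4 -F1 -F2 -F3 -F4; split.
  - exact: (svalP (ts J1 ⊚ exist (fun f => hom f _ _) _ hsl ⊚ P1 +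
                   ts J2 ⊚ exist (fun f => hom f _ _) _ htl ⊚ P2)).
  - exact: (congr1 sval G1).
  - exact: (congr1 sval G2).
  - exact: (esym (congr1 sval G3)).
  - exact: (esym (congr1 sval G4)).
have hb i : (i < n)%N -> is_biprod (so s i) (so t i) (D i) by apply: hD.
split.
  split => //.
  - by move=> i ni; case: (step i ni).
  - by case: last.
exists (fun i => bi1 (D i)), (fun i => bi2 (D i)), (fun i => bp1 (D i)), (fun i => bp2 (D i)).
split.
- split.
  + by move=> i ni; case: (hb i ni).
  + by move=> i ni; case: (step i ni).
  + by case: last.
- split.
  + by move=> i ni; case: (hb i ni).
  + by move=> i ni; case: (step i ni).
  + by case: last.
- split.
  + by move=> i ni; case: (hb i ni).
  + by move=> i ni; case: (step i ni).
  + by case: last.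
- split.
  + by move=> i ni; case: (hb i ni).
  + by move=> i ni; case: (step i ni).
  + by case: last.
by move=> i ni /=; rewrite -bipE; apply: hD.
Qed.
End Typed.

Section Val.
Variable C : ncat.
Hypothesis HP : preadditive C.
Variable V : zmodType.
Variable g : Ob C -> V.
Hypothesis giso : forall X Y, isoob X Y -> g X = g Y.

Definition fval (L : fsum C) : V := \sum_(p <- L) g p.2 *~ p.1.

Lemma valD (L L' : fsum C) : fval (L ++ L') = fval L + fval L'.
Proof. by rewrite /fval big_cat. Qed.

Lemma val_scale k (L : fsum C) : fval (fscale k L) = fval L *~ k.
Proof.
rewrite /fval big_map mulrz_suml; apply: eq_bigr => p _ /=.
by rewrite mulrC mulrzA.
Qed.

Lemma coef_cat (L L' : fsum C) Y : coef (L ++ L') Y = coef L Y + coef L' Y.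
Proof. by rewrite /coef big_cat. Qed.

Lemma coef_scale k (L : fsum C) Y : coef (fscale k L) Y = k * coef L Y.
Proof.
rewrite /coef big_map mulr_sumr; apply: eq_bigr => p _ /=.
by case: ifP; rewrite ?mulr0.
Qed.

Lemma val0 (L : fsum C) : (forall Y, coef L Y = 0) -> fval L = 0.
Proof.
elim: {L}(size L) {-2}L (leqnn (size L)) => [|m IH] [|[c X] L0] //= hs hc;
  try by rewrite /fval big_nil.
pose pX := fun p : int * Ob C => `[< isoob p.2 X >].
have hX := hc X; rewrite /coef big_cons /= asboolT ?(isoob_refl HP) // in hX.
rewrite (bigID pX) /= in hX.
rewrite /fval big_cons /= (bigID pX) /=.
have -> : \sum_(i <- L0 | pX i) g i.2 *~ i.1 = g X *~ \sum_(i <- L0 | pX i) i.1.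
  rewrite mulrz_sumr; apply: eq_bigr => p /asboolP hp; by rewrite (giso hp).
have e1 : \sum_(i <- L0 | pX i) (if `[< isoob i.2 X >] then i.1 else 0) = \sum_(i <- L0 | pX i) i.1.
  by apply: eq_bigr => p hp; rewrite /pX in hp; rewrite hp.
have e2 : \sum_(i <- L0 | ~~ pX i) (if `[< isoob i.2 X >] then i.1 else 0) = 0.
  by apply: big1 => p hp; rewrite /pX in hp; rewrite (negbTE hp).
rewrite e1 e2 addr0 in hX.
rewrite addrA -mulrzDr hX mulr0z add0r -big_filter.
apply: IH; first by rewrite size_filter (leq_trans (count_size _ _)).
move=> Y; rewrite /coef big_filter.
case: (asboolP (isoob X Y)) => hXY.
  apply: big1 => p hp; case: asboolP => // hpY; case/negP: hp; apply/asboolP.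
  exact: (isoob_trans HP hpY (isoob_sym HP hXY)).
have e3 : \sum_(i <- L0 | pX i) (if `[< isoob i.2 Y >] then i.1 else 0) = 0.
  apply: big1 => p hp; rewrite /pX in hp; move/asboolP: hp => hp.
  case: asboolP => // hpY; case: hXY; exact: (isoob_trans HP (isoob_sym HP hp) hpY).
have hY := hc Y; rewrite /coef big_cons /= asboolF // add0r (bigID pX) /= e3 add0r in hY.
exact: hY.
exact: isoob_refl.
Qed.

Lemma Feq_val (L L' : fsum C) : Feq L L' -> fval L = fval L'.
Proof.
move=> h; apply/eqP; rewrite -subr_eq0 -mulrN1z -val_scale -valD; apply/eqP/val0 => Y.
by rewrite coef_cat coef_scale h mulN1r addrN.
Qed.

Lemma span_val (G : fsum C -> Prop) L : (forall L, G L -> fval L = 0) -> in_span G L -> fval L = 0.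
Proof.
move=> hG [gs [hf he]]; rewrite (Feq_val he); elim: gs hf {he} => [|[k L1] gs IH] hf.
  by rewrite /fval big_nil.
inversion hf; subst; rewrite /= valD val_scale hG // mul0rz add0r; exact: IH.
Qed.
End Val.

Section Grp.
Variable C : ncat.
Hypothesis HP : preadditive C.
Variable bp : Ob C -> Ob C -> bip C.
Hypothesis bpP : forall X Y, is_biprod X Y (bp X Y).
Variable P : Ob C -> Prop.
Hypothesis Piso : forall X Y, P X -> isoob X Y -> P Y.
Variable Z0 : Ob C.
Hypothesis PZ0 : P Z0.
Hypothesis zZ0 : is_zero Z0.
Hypothesis Padd : forall X Y, P X -> P Y -> exists d, P (bo d) /\ is_biprod X Y d.
Hypothesis Pden : dense P.

Local Notation O X Y := (bo (bp X Y)).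
Local Notation it := (isoob_trans HP).
Local Notation isy := (isoob_sym HP).
Local Notation irf := (isoob_refl HP).

Lemma O_any X Y d : is_biprod X Y d -> isoob (bo d) (O X Y).
Proof. by move=> h; exact: (biprod_uniq HP h (bpP X Y)). Qed.
Lemma O_iso X X' Y Y' : isoob X X' -> isoob Y Y' -> isoob (O X Y) (O X' Y').
Proof.
move=> hX hY; apply: (it (biprod_isoL HP (bpP X Y) hX (bpP X' Y))).
exact: (biprod_isoR HP (bpP X' Y) hY (bpP X' Y')).
Qed.
Lemma O_comm X Y : isoob (O X Y) (O Y X).
Proof. exact: (biprod_comm HP (bpP X Y) (bpP Y X)). Qed.
Lemma O_assoc X Y W : isoob (O (O X Y) W) (O X (O Y W)).
Proof. exact: (biprod_assoc HP (bpP X Y) (bpP _ W) (bpP Y W) (bpP X _)). Qed.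
Lemma O_zero X Z : is_zero Z -> isoob (O X Z) X.
Proof. by move=> z; exact: (biprod_zero HP z (bpP X Z)). Qed.
Lemma PO X Y : P X -> P Y -> P (O X Y).
Proof. by move=> hX hY; case: (Padd hX hY) => d [hd bd]; exact: (Piso hd (O_any bd)). Qed.
Lemma Pzero Z : is_zero Z -> P Z.
Proof. by move=> z; exact: (Piso PZ0 (zero_iso HP zZ0 z)). Qed.
Lemma Pcompl X : exists Y, P (O X Y).
Proof. by case: (Pden X) => Y [d [bd hd]]; exists Y; exact: (Piso hd (O_any bd)). Qed.

Lemma O_inter X Y A B : isoob (O (O X Y) (O A B)) (O (O X A) (O Y B)).
Proof.
apply: (it (O_assoc _ _ _)).
apply: (it (O_iso (irf X) (isy (O_assoc _ _ _)))).
apply: (it (O_iso (irf X) (O_iso (O_comm _ _) (irf B)))).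
apply: (it (O_iso (irf X) (O_assoc _ _ _))).
exact: (isy (O_assoc _ _ _)).
Qed.

Definition sim X Y := exists A1 A2, [/\ P A1, P A2 & isoob (O X A1) (O Y A2)].

Lemma sim_refl X : sim X X.
Proof. by exists Z0, Z0; split => //; exact: irf. Qed.
Lemma sim_sym X Y : sim X Y -> sim Y X.
Proof. by case=> A1 [A2 [h1 h2 h]]; exists A2, A1; split => //; exact: isy. Qed.
Lemma sim_trans X Y W : sim X Y -> sim Y W -> sim X W.
Proof.
case=> A1 [A2 [a1 a2 h1]] [A3 [A4 [a3 a4 h2]]].
exists (O A1 A3), (O A4 A2); split; try exact: PO.
apply: (it (isy (O_assoc _ _ _))).
apply: (it (O_iso h1 (irf A3))).
apply: (it (O_assoc _ _ _)).
apply: (it (O_iso (irf Y) (O_comm _ _))).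
apply: (it (isy (O_assoc _ _ _))).
apply: (it (O_iso h2 (irf A2))).
exact: O_assoc.
Qed.
Lemma sim_O X X' Y Y' : sim X X' -> sim Y Y' -> sim (O X Y) (O X' Y').
Proof.
case=> A1 [A2 [a1 a2 h1]] [B1 [B2 [b1 b2 h2]]].
exists (O A1 B1), (O A2 B2); split; try exact: PO.
apply: (it (O_inter _ _ _ _)).
apply: (it (O_iso h1 h2)).
exact: (isy (O_inter _ _ _ _)).
Qed.
Lemma iso_sim X Y : isoob X Y -> sim X Y.
Proof. by move=> h; exists Z0, Z0; split => //; exact: O_iso h (irf Z0). Qed.
Lemma P_sim0 X : P X -> sim X Z0.
Proof. by move=> h; exists Z0, X; split => //; exact: O_comm. Qed.

Definition G := {S : Ob C -> Prop | exists X, S = sim X}.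
HB.instance Definition _ := gen_eqMixin G.
HB.instance Definition _ := gen_choiceMixin G.

Lemma Gext (a b : G) : sval a = sval b -> a = b.
Proof. case: a b => [a pa] [b pb] /= E; subst; congr exist; apply: Prop_irrelevance. Qed.

Definition cls X : G := exist _ (sim X) (ex_intro _ X erefl).

Lemma cls_eq X Y : cls X = cls Y <-> sim X Y.
Proof.
split.
  move/(congr1 sval) => /= e; have h := sim_refl X; rewrite e in h; exact: sim_sym h.
move=> h; apply: Gext => /=; apply: funext => W; apply: propext; split.
  exact: sim_trans (sim_sym h).
exact: sim_trans h.
Qed.

Definition rep (a : G) : Ob C := projT1 (cid (svalP a)).
Lemma rep_cls a : cls (rep a) = a.
Proof. by apply: Gext; rewrite /= /rep; case: (cid (svalP a)) => X /= ->. Qed.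
Lemma Gind a : exists X, a = cls X.
Proof. by exists (rep a); rewrite rep_cls. Qed.
Lemma rep_sim X : sim (rep (cls X)) X.
Proof. by apply/cls_eq; rewrite rep_cls. Qed.

Definition compl X := projT1 (cid (Pcompl X)).
Lemma complP X : P (O X (compl X)).
Proof. exact: (projT2 (cid (Pcompl X))). Qed.

Definition Gadd a b := cls (O (rep a) (rep b)).
Definition Gz := cls Z0.
Definition Gopp a := cls (compl (rep a)).

Lemma clsD X Y : Gadd (cls X) (cls Y) = cls (O X Y).
Proof. by apply/cls_eq; apply: sim_O; apply: rep_sim. Qed.

Lemma GaddA : associative Gadd.
Proof.
move=> a b c; case: (Gind a) (Gind b) (Gind c) => [X ->] [Y ->] [W ->].
rewrite !clsD; apply/cls_eq/iso_sim; exact: isy (O_assoc _ _ _).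
Qed.
Lemma GaddC : commutative Gadd.
Proof.
move=> a b; case: (Gind a) (Gind b) => [X ->] [Y ->].
by rewrite !clsD; apply/cls_eq/iso_sim; exact: O_comm.
Qed.
Lemma Gadd0 : left_id Gz Gadd.
Proof.
move=> a; case: (Gind a) => X ->; rewrite /Gz clsD; apply/cls_eq/iso_sim.
exact: (it (O_comm _ _) (O_zero X zZ0)).
Qed.
Lemma GaddN : left_inverse Gz Gopp Gadd.
Proof.
move=> a; case: (Gind a) => X ->; rewrite /Gopp clsD; apply/cls_eq.
apply: (sim_trans (sim_O (sim_refl _) (sim_sym (rep_sim X)))).
apply: (sim_trans (iso_sim (O_comm _ _))).
exact: P_sim0 (complP _).
Qed.

HB.instance Definition _ := GRing.isZmodule.Build G GaddA GaddC Gadd0 GaddN.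

Lemma g_iso X Y : isoob X Y -> cls X = cls Y.
Proof. by move=> h; apply/cls_eq/iso_sim. Qed.
Lemma g_bip X Y d : is_biprod X Y d -> cls (bo d) = cls X + cls Y.
Proof. by move=> h; rewrite [_ + _]clsD; apply: g_iso; exact: O_any. Qed.
Lemma g_P X : P X -> cls X = 0.
Proof. by move=> h; apply/cls_eq; exact: P_sim0. Qed.
Lemma g_0 X : cls X = 0 -> exists A, P A /\ P (O X A).
Proof.
move/cls_eq => [A1 [A2 [a1 a2 h]]]; exists A1; split => //.
exact: (Piso (PO PZ0 a2) (isy h)).
Qed.

Hypothesis HS : sig_auto (fun _ : Ob C => True).
Variable n : nat.
Hypothesis n3 : (2 < n)%N.
Variable N : nsigseq C -> Prop.
Hypothesis HN : nangulated n (fun _ => True) N.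
Hypothesis Psig : forall X, P X -> P (SigO X).
Hypothesis Hcomp : complete n N P.

Lemma rot_obj k (s : nsigseq C) i : (k <= n)%N -> (i < n)%N ->
  so (iter k (lrot n) s) i = if (i + k < n)%N then so s (i + k) else SigO (so s (i + k - n)).
Proof.
elim: k i => [|k IH] i kn ni; first by rewrite addn0 ni.
rewrite iterS /=; case: ifP => h.
  rewrite IH; [by rewrite addSnnS | lia | lia].
rewrite IH; [|lia|lia].
have -> : (0 + k < n)%N by lia.
have -> : (i + k.+1 < n)%N = false by lia.
by have -> : (i + k.+1 - n = 0 + k)%N by lia.
Qed.

Lemma rotN k (s : nsigseq C) : N s -> N (iter k (lrot n) s).
Proof.
elim: k => // k IH hs; rewrite iterS; have hs' := IH hs.
by apply/(na_rot HN (na_wf HN hs')).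
Qed.

Definition pairs m (A : Ob C) := iter (n - m) (lrot n) (triv n A Z0).

Lemma pairsN m (A : Ob C) : N (pairs m A).
Proof. by apply: rotN; apply: (na_triv HN). Qed.

Lemma pairs_obj m (A : Ob C) i : (m.+2 <= n)%N -> (i < n)%N ->
  so (pairs m A) i = if (i < m)%N then Z0 else SigO (if (i - m < 2)%N then A else Z0).
Proof.
move=> mn ni; rewrite /pairs rot_obj //; last by lia.
rewrite /triv /=.
case: ifP => h.
  have -> : (i < m)%N by lia.
  by have -> : (i + (n - m) < 2)%N = false by lia.
have -> : (i < m)%N = false by lia.
by have -> : (i + (n - m) - n = i - m)%N by lia.
Qed.

Definition cv (s : nsigseq C) : G := \sum_(i <- iota 0 n) cls (so s i) *~ ((-1)^+i).

Lemma sumN (u t : nsigseq C) : N u -> N t ->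
  N (sumseq n u t (fun i => bp (so u i) (so t i))) /\
  cv (sumseq n u t (fun i => bp (so u i) (so t i))) = cv u + cv t.
Proof.
move=> hu ht.
have n0 : (0 < n)%N by lia.
have [hw hsum] := nseq_sum HP HS n0 (na_wf HN hu) (na_wf HN ht) (fun i _ => bpP (so u i) (so t i)).
split; first by apply: (proj2 (na_sum HN (na_wf HN hu) (na_wf HN ht) hw hsum)).
rewrite /cv -big_split; apply: eq_bigr => i _ /=.
by rewrite (g_bip (bpP _ _)) mulrzDl.
Qed.

Lemma cv_allP (u : nsigseq C) : (forall i, (i < n)%N -> P (so u i)) -> cv u = 0.
Proof.
move=> h; rewrite /cv big1_seq // => i; rewrite mem_iota add0n => /andP [_ hi].
by rewrite (g_P (h i hi)) mul0rz.
Qed.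

Lemma cv_pairs m A : (m.+2 <= n)%N -> cv (pairs m A) = 0.
Proof.
move=> mn; rewrite /cv.
have -> : iota 0 n = iota 0 m ++ [:: m; m.+1] ++ iota m.+2 (n - m.+2).
  have e1 : iota 0 n = iota 0 (m + 2 + (n - m.+2)) by congr iota; lia.
  by rewrite e1 iotaD iotaD add0n -catA addn2.
rewrite !big_cat /= !big_cons big_nil.
rewrite big1_seq; last first.
  move=> i; rewrite mem_iota => hi.
  rewrite pairs_obj; [|lia|lia]. have -> : (i < m)%N by lia. by rewrite (g_P PZ0) mul0rz.
rewrite big1_seq; last first.
  move=> i; rewrite mem_iota => h1.
  rewrite pairs_obj; [|lia|lia].
  have -> : (i < m)%N = false by lia.
  have -> : (i - m < 2)%N = false by lia.
  by rewrite (g_P (Psig PZ0)) mul0rz.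
rewrite !pairs_obj; try lia.
rewrite ltnn subnn /= ltnNge leqnSn /= subSnn /=.
by rewrite add0r addr0 exprS mulN1r mulrNz addr0 addrN.
Qed.

Lemma chi_zero (s : nsigseq C) : N s -> cv s = 0.
Proof.
move=> hs.
have claim : forall m, (m <= n.-1)%N ->
    exists u, [/\ N u, cv u = cv s & forall i, (i < m)%N -> P (so u i)].
  elim=> [|m IH] mn; first by exists s; split.
  have [u [hu cu pu]] := IH (ltnW mn).
  have mn2 : (m.+2 <= n)%N by lia.
  have [A eA] : exists A, SigO A = compl (so u m).
    by case: HS => _ _ _ _ [_ _ hsur _ _]; case: (hsur (compl (so u m)) I) => A [_ eA]; exists A.
  have [hw cw] := sumN hu (pairsN m A).
  exists (sumseq n u (pairs m A) (fun i => bp (so u i) (so (pairs m A) i))); split => //.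
    by rewrite cw cv_pairs // addr0.
  move=> i im /=; rewrite pairs_obj //; last by lia.
  case: (ltngtP i m) => him.
  - by apply: PO => //; apply: pu.
  - lia.
  - by rewrite him subnn /= eA; exact: complP.
have [u [hu cu pu]] := claim n.-1 (leqnn _).
rewrite -cu; apply: cv_allP => i ni.
have [hi|hi] := boolP (i == n.-1); last by apply: pu; lia.
rewrite (eqP hi); apply: (Hcomp hu); first by lia.
by move=> j jn jne; apply: pu; lia.
Qed.

Lemma g0P X : cls X = 0 -> P X.
Proof.
case/g_0 => A1 [a1 pa1].
have [B eB] : exists B, SigO B = A1.
  by case: HS => _ _ _ _ [_ _ hsur _ _]; case: (hsur A1 I) => B [_ eB]; exists B.
have hs0 : N (triv n X Z0) by apply: (na_triv HN).
have [hw _] := sumN hs0 (pairsN 1 B).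
have := Hcomp hw (k := 0) _ _.
have n0 : (0 < n)%N by lia.
move/(_ n0) => h.
have : P (O X Z0).
  have -> : O X Z0 = so (sumseq n (triv n X Z0) (pairs 1 B)
        (fun i => bp (so (triv n X Z0) i) (so (pairs 1 B) i))) 0.
    by rewrite /= pairs_obj.
  apply: h => i ni inz /=; rewrite pairs_obj //.
  case: i ni inz => // [[|i]] ni _ /=.
    by rewrite eB.
  apply: PO => //; case: ifP => _; [rewrite eB //|exact: Psig].
by move=> hp; apply: (Piso hp); exact: O_zero.
Qed.

Hypothesis Hodd : odd n.

Lemma main_sec X : class_zero_mod_image n N P X -> P X.
Proof.
case=> L1 [L2 [h1 h2 he]].
have e := Feq_val HP g_iso he.
rewrite valD in e.
have v1 : fval cls L1 = 0.
  apply: (@span_val C HP G cls g_iso (Rgen n N) L1 _ h1) => L [[s [hs ->]]|[ho _]].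
    by rewrite /fval /chi big_map; exact: chi_zero.
  by rewrite Hodd in ho.
have v2 : fval cls L2 = 0.
  apply: (@span_val C HP G cls g_iso (ImGen P) L2 _ h2) => L [A [hA ->]].
  by rewrite /fval big_cons big_nil /= addr0 (g_P hA).
rewrite v1 v2 addr0 /fval big_cons big_nil /= addr0 in e.
exact: g0P.
Qed.
End Grp.

Theorem lemma4p4 (n : nat) (C : ncat) (N : nsigseq C -> Prop)
    (inA : Ob C -> Prop) (NA : nsigseq C -> Prop) :
  (3 <= n)%N -> odd n ->
  nangulated n (fun _ => True) N ->
  nang_subcat n N inA NA ->
  dense inA ->
  complete n N inA ->
  forall X : Ob C, inA X <-> class_zero_mod_image n N inA X.
Proof.
move=> n3 hodd HN [Piso HA _] Hden Hcomp X.
have [HP _ hbp] := na_add HN.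
have HS := na_sig HN.
have [_ [Z0 [PZ0 zZ0]] Padd] := na_add HA.
have [_ _ _ _ [Psig _ _ _ _]] := na_sig HA.
have hb : forall X Y : Ob C, exists d, is_biprod X Y d.
  by move=> X0 Y0; case: (hbp X0 Y0 I I) => d [_ hd]; exists d.
pose bp X Y := projT1 (cid (hb X Y)).
have bpP X0 Y0 : is_biprod X0 Y0 (bp X0 Y0) := projT2 (cid (hb X0 Y0)).
split; last exact: (main_sec HP bpP Piso PZ0 zZ0 Padd Hden HS n3 HN Psig Hcomp hodd).
move=> hX; exists [::], [:: (1%R, X)]; split.
- by exists [::]; split; [constructor | move=> Y].
- exists [:: (1%R, [:: (1%R, X)])]; split.
    by constructor; [exists X | constructor].
  by move=> Y; rewrite /Feq /coef /= !big_cons !big_nil.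
- by move=> Y.
Qed.
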